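(* Let $1\le\tau_1<\tau_2<\dots<\tau_m$ be fixed thresholds. Consider instances with two candidates $P,Q$, and any deterministic mechanism which selects a winner using only the threshold information described in the context. Then the worst-case distortion of the mechanism is at least $$\max\Big\{\tau_1,\ \frac{\tau_m+2}{\tau_m},\ \max_{1\le l\le m-1}\frac{\tau_l\tau_{l+1}+2\tau_{l+1}-1}{\tau_l\tau_{l+1}+1}\Big\}.$$ (Equivalently, with the conventions $\tau_0=1/\tau_1$ and $\tau_{m+1}=\infty$, the bound is $\max_{0\le l\le m}\frac{\tau_l\tau_{l+1}+2\tau_{l+1}-1}{\tau_l\tau_{l+1}+1}$, the $l=m$ term being interpreted as its limit $(\tau_m+2)/\tau_m$.)
   Context: Voters $N=\{1,\dots,n\}$ and a finite set of candidates $\mathcal C$ are points of an arbitrary (unknown) metric space $(X,d)$. Voter $i$ prefers $P$ to $Q$ only if $d(i,P)\le d(i,Q)$; the strength of this preference is $\alpha_i^{PQ}=d(i,Q)/d(i,P)\ge1$. $SC(Y)=\sum_{i\in N}d(i,Y)$. Distortion of a winner $P_I$ on instance $I=(N,\mathcal C,d)$ is $SC(P_I)/\min_{Z\in\mathcal C}SC(Z)$; the distortion of a mechanism is the supremum over instances. Threshold information: given thresholds $1\le\tau_1<\dots<\tau_m$ and setting $\tau_{m+1}=\infty$, for each voter $i$ and each pair $P,Q$, if $i$'s preference strength between $P$ and $Q$ is at least $\tau_1$ the mechanism learns which of the two $i$ prefers and the unique $l\in\{1,\dots,m\}$ with $\tau_l\le$ strength $<\tau_{l+1}$; if the strength is below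 $\tau_1$ the mechanism learns nothing about $i$'s preference between $P$ and $Q$. Thus it learns the sets $A_l=\{i: d(i,P)\le d(i,Q),\ \tau_l\le\alpha_i^{PQ}<\tau_{l+1}\}$, $B_l=\{j: d(j,Q)\le d(j,P),\ \tau_l\le\alpha_j^{QP}<\tau_{l+1}\}$, and the set $C$ of remaining voters. *)

(* Defs.v *)
From Stdlib Require Import Reals List Arith.
Import ListNotations.
Open Scope R_scope.

Definition Rleb (x y : R) : bool := if Rle_dec x y then true else false.
Definition Rltb (x y : R) : bool := if Rlt_dec x y then true else false.

Record Instance := mkInstance {
  X : Type;
  d : X -> X -> R;
  d_nonneg : forall x y, 0 <= d x y;
  d_sep : forall x y, d x y = 0 <-> x = y;
  d_sym : forall x y, d x y = d y x;
  d_tri : forall x y z, d x z <= d x y + d y z;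
  candP : X;
  candQ : X;
  voters : list X
}.

Definition SC (I : Instance) (Y : X I) : R :=
  fold_right Rplus 0 (map (fun v => d I v Y) (voters I)).

(* Thresholds tau = [tau_1; ...; tau_m] (0-indexed in the list).
   level_ok tau l a b : a voter at distance a from candidate Y and b from
   candidate Z prefers Y (a <= b) with strength alpha = b/a in
   [tau_{l+1}, tau_{l+2}) (paper's 1-based indices), tau_{m+1} = infinity.
   Written multiplicatively: tau_l * a <= b < tau_{l+1} * a, so that
   a = 0 gives strength infinity (top level). *)
Definition level_ok (tau : list R) (l : nat) (a b : R) : bool :=
  Rleb a b && Rleb (nth l tau 0 * a) b &&
  (if Nat.ltb (S l) (length tau) then Rltb b (nth (S l) tau 0 * a) else true).

(* Information about one voter: membership in A_1..A_m and in B_1..B_m.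
   (Membership in C is determined: in no A_l and no B_l.) *)
Definition voter_info (tau : list R) (I : Instance) (v : X I)
  : list bool * list bool :=
  (map (fun l => level_ok tau l (d I v (candP I)) (d I v (candQ I)))
       (seq 0 (length tau)),
   map (fun l => level_ok tau l (d I v (candQ I)) (d I v (candP I)))
       (seq 0 (length tau))).

Definition threshold_info (tau : list R) (I : Instance)
  : list (list bool * list bool) :=
  map (voter_info tau I) (voters I).

Definition Mechanism := list (list bool * list bool) -> bool.

Definition winner (tau : list R) (M : Mechanism) (I : Instance) : X I :=
  if M (threshold_info tau I) then candP I else candQ I.

(* "distortion of M on I is at most D": SC(winner) / min SC <= D,
   written multiplicatively (positive / 0 counts as infinite distortion). *)
Definition distortion_le (tau : list R) (M : Mechanism) (I : Instance) (D : R)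
  : Prop :=
  SC I (winner tau M I) <= D * Rmin (SC I (candP I)) (SC I (candQ I)).

Definition valid_thresholds (tau : list R) : Prop :=
  tau <> [] /\ 1 <= nth 0 tau 0 /\
  (forall k, (S k < length tau)%nat -> nth k tau 0 < nth (S k) tau 0).

Definition mid_term (a b : R) : R := (a * b + 2 * b - 1) / (a * b + 1).

Definition lower_bound (tau : list R) : R :=
  let m := length tau in
  let t1 := nth 0 tau 0 in
  let tm := nth (m - 1) tau 0 in
  fold_right Rmax (Rmax t1 ((tm + 2) / tm))
    (map (fun k => mid_term (nth k tau 0) (nth (S k) tau 0)) (seq 0 (m - 1))).

(* Main.v *)
Require Import Defs.
From Stdlib Require Import Reals List Arith.
From Stdlib Require Import Lra Lia Psatz.
Import ListNotations.
Open Scope R_scope.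

Lemma dn : forall x y : R, 0 <= Rabs (x - y).
Proof. intros; apply Rabs_pos. Qed.
Lemma dsep : forall x y : R, Rabs (x - y) = 0 <-> x = y.
Proof.
  intros x y; split; intro H.
  - destruct (Rcase_abs (x - y)).
    + rewrite Rabs_left in H; lra.
    + rewrite Rabs_right in H; lra.
  - subst. replace (y - y) with 0 by ring. apply Rabs_R0.
Qed.
Lemma dsym : forall x y : R, Rabs (x - y) = Rabs (y - x).
Proof. intros; apply Rabs_minus_sym. Qed.
Lemma dtri : forall x y z : R, Rabs (x - z) <= Rabs (x - y) + Rabs (y - z).
Proof. intros. replace (x - z) with ((x - y) + (y - z)) by ring. apply Rabs_triang. Qed.

Definition lineI (q0 : R) (vs : list R) : Instance :=
  mkInstance R (fun x y => Rabs (x - y)) dn dsep dsym dtri 0 q0 vs.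

Definition vinf (tau : list R) (p q : R) : list bool * list bool :=
  (map (fun l => level_ok tau l p q) (seq 0 (length tau)),
   map (fun l => level_ok tau l q p) (seq 0 (length tau))).

Lemma ti_line tau q vs : threshold_info tau (lineI q vs) =
  map (fun v => vinf tau (Rabs (v - 0)) (Rabs (v - q))) vs.
Proof. reflexivity. Qed.

Lemma SC_line q vs (y : R) : SC (lineI q vs) y =
  fold_right Rplus 0 (map (fun v => Rabs (v - y)) vs).
Proof. reflexivity. Qed.

Lemma Rabs_val x v : 0 <= v -> (x = v \/ x = - v) -> Rabs x = v.
Proof.
  intros H [E|E]; subst.
  - apply Rabs_right; lra.
  - rewrite Rabs_Ropp; apply Rabs_right; lra.
Qed.

Lemma vinf_eq tau p q p' q' :
  (forall l, (l < length tau)%nat -> level_ok tau l p q = level_ok tau l p' q') ->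
  (forall l, (l < length tau)%nat -> level_ok tau l q p = level_ok tau l q' p') ->
  vinf tau p q = vinf tau p' q'.
Proof.
  intros H1 H2; unfold vinf; f_equal; apply map_ext_in; intros l Hl;
  apply in_seq in Hl; [apply H1 | apply H2]; lia.
Qed.

Lemma lo_eq tau l p q p' q' : p <= q -> p' <= q' -> (l < length tau)%nat ->
  (forall j, (j < length tau)%nat ->
     (nth j tau 0 * p <= q <-> nth j tau 0 * p' <= q')) ->
  level_ok tau l p q = level_ok tau l p' q'.
Proof.
  intros hp hp' hl H. unfold level_ok, Rleb, Rltb.
  destruct (Rle_dec p q); [|lra]. destruct (Rle_dec p' q'); [|lra].
  pose proof (H l hl) as [H1 H2].
  destruct (Rle_dec (nth l tau 0 * p) q) as [A|A];
  destruct (Rle_dec (nth l tau 0 * p') q') as [B|B];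
  try (exfalso; tauto); [|reflexivity].
  simpl.
  destruct (Nat.ltb (S l) (length tau)) eqn:E; [|reflexivity].
  apply Nat.ltb_lt in E. pose proof (H (S l) E) as [H3 H4].
  destruct (Rlt_dec q (nth (S l) tau 0 * p)) as [C|C];
  destruct (Rlt_dec q' (nth (S l) tau 0 * p')) as [F|F]; try reflexivity; exfalso.
  - apply Rnot_lt_le in F; apply H4 in F; lra.
  - apply Rnot_lt_le in C; apply H3 in C; lra.
Qed.

Lemma lo_rev tau l p q : q < p -> level_ok tau l p q = false.
Proof. intros H; unfold level_ok, Rleb; destruct (Rle_dec p q); [lra|reflexivity]. Qed.

Lemma lo_none tau l p q : ~ (nth l tau 0 * p <= q) -> level_ok tau l p q = false.
Proof.
  intros H; unfold level_ok. unfold Rleb at 2.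
  destruct (Rle_dec (nth l tau 0 * p) q); [contradiction|].
  destruct (Rleb p q); reflexivity.
Qed.

Lemma two_inst tau M D q1 vs1 q2 vs2 :
  (forall I, distortion_le tau M I D) ->
  threshold_info tau (lineI q1 vs1) = threshold_info tau (lineI q2 vs2) ->
  (SC (lineI q1 vs1) 0 <= D * Rmin (SC (lineI q1 vs1) 0) (SC (lineI q1 vs1) q1) /\
   SC (lineI q2 vs2) 0 <= D * Rmin (SC (lineI q2 vs2) 0) (SC (lineI q2 vs2) q2)) \/
  (SC (lineI q1 vs1) q1 <= D * Rmin (SC (lineI q1 vs1) 0) (SC (lineI q1 vs1) q1) /\
   SC (lineI q2 vs2) q2 <= D * Rmin (SC (lineI q2 vs2) 0) (SC (lineI q2 vs2) q2)).
Proof.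
  intros HD Heq.
  pose proof (HD (lineI q1 vs1)) as h1. pose proof (HD (lineI q2 vs2)) as h2.
  unfold distortion_le, winner in h1, h2. rewrite <- Heq in h2.
  destruct (M (threshold_info tau (lineI q1 vs1))); [left|right]; split; assumption.
Qed.

Lemma scale_le c u v : 0 < c -> (u * c <= v * c <-> u <= v).
Proof. intros; split; intro; nra. Qed.

Lemma div_le a b D : 0 < b -> a <= D * b -> a / b <= D.
Proof.
  intros Hb H. apply Rmult_le_reg_r with b; [lra|].
  unfold Rdiv; rewrite Rmult_assoc, Rinv_l; lra.
Qed.

Lemma lim_lemma (h : R -> R) (D c : R) : 0 < c -> continuity_pt h 0 ->
  (forall x, 0 < x < c -> h x <= D) -> h 0 <= D.
Proof.
  intros Hc Hcont H.
  destruct (Rle_dec (h 0) D) as [|Hn]; [assumption|]. exfalso.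
  apply Rnot_le_lt in Hn.
  destruct (Hcont (h 0 - D)) as [alp [Ha Hal]]; [lra|].
  set (x := Rmin alp c / 2).
  assert (Hx1 : 0 < x) by (unfold x; apply Rmin_case; lra).
  assert (Hx2 : x < alp /\ x < c) by (unfold x; split;
      [pose proof (Rmin_l alp c) | pose proof (Rmin_r alp c)]; lra).
  assert (Hd : R_dist (h x) (h 0) < h 0 - D).
  { apply Hal. split; [split; [exact I|lra]|].
    change (Rabs (x - 0) < alp). rewrite Rminus_0_r, Rabs_right; lra. }
  pose proof (H x (conj Hx1 (proj2 Hx2))).
  change (Rabs (h x - h 0) < h 0 - D) in Hd. apply Rabs_def2 in Hd. lra.
Qed.

Lemma tau_lt tau : valid_thresholds tau -> forall i j, (i < j)%nat ->
  (j < length tau)%nat -> nth i tau 0 < nth j tau 0.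
Proof.
  intros [_ [_ Hm]] i j Hij; induction Hij as [|j Hij IH]; intros Hj.
  - apply Hm; lia.
  - pose proof (Hm j Hj). assert (nth i tau 0 < nth j tau 0) by (apply IH; lia). lra.
Qed.

Lemma tau_le tau : valid_thresholds tau -> forall i j, (i <= j)%nat ->
  (j < length tau)%nat -> nth i tau 0 <= nth j tau 0.
Proof.
  intros Hv i j Hij Hj. destruct (Nat.eq_dec i j); [subst; lra|].
  left; apply tau_lt; auto; lia.
Qed.

Lemma tau_ge1 tau : valid_thresholds tau -> forall i, (i < length tau)%nat ->
  1 <= nth i tau 0.
Proof.
  intros Hv i Hi. pose proof (tau_le tau Hv 0 i ltac:(lia) Hi).
  destruct Hv as [_ [H1 _]]; lra.
Qed.

Ltac absv := first
  [ apply Rabs_val; [nra | first [left; ring | right; ring]]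
  | symmetry; apply Rabs_val; [nra | first [left; ring | right; ring]] ].

Lemma fold_max_le base l D : base <= D -> (forall y, In y l -> y <= D) ->
  fold_right Rmax base l <= D.
Proof.
  induction l as [|a l IH]; intros Hb H; simpl; [assumption|].
  apply Rmax_lub; [apply H; left; reflexivity | apply IH; auto].
  intros; apply H; right; assumption.
Qed.

Section Main.
Variable tau : list R.
Hypothesis Hv : valid_thresholds tau.
Variable M : Mechanism.
Variable D : R.
Hypothesis HD : forall I : Instance, distortion_le tau M I D.

Lemma len_pos : (0 < length tau)%nat.
Proof. destruct Hv as [H _]. destruct tau; [congruence| simpl; lia]. Qed.

Lemma term_top : let tm := nth (length tau - 1) tau 0 in (tm + 2) / tm <= D.
Proof.
  intro tm. pose proof len_pos as Hlen.
  assert (Htm : 1 <= tm) by (apply tau_ge1; auto; lia).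
  assert (Hle : forall j, (j < length tau)%nat -> nth j tau 0 <= tm)
    by (intros; apply tau_le; auto; lia).
  pose proof (tau_ge1 tau Hv) as Hg.
  set (h := fun x => (tm + x + 2) / (tm + x)).
  replace ((tm + 2) / tm) with (h 0) by (unfold h; rewrite Rplus_0_r; reflexivity).
  apply lim_lemma with 1; [lra | unfold h; reg; lra |].
  intros x Hx. unfold h. set (s := tm + x).
  assert (Hs : tm < s) by (unfold s; lra).
  destruct (two_inst tau M D (s+1) [0; s] (s+1) [1; s+1] HD) as [[_ H]|[H _]].
  - rewrite !ti_line. cbn [map].
    replace (Rabs (0 - 0)) with 0 by absv.
    replace (Rabs (0 - (s+1))) with (s+1) by absv.
    replace (Rabs (s - 0)) with s by absv.
    replace (Rabs (s - (s+1))) with 1 by absv.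
    replace (Rabs (1 - 0)) with 1 by absv.
    replace (Rabs (1 - (s+1))) with s by absv.
    replace (Rabs (s + 1 - 0)) with (s+1) by absv.
    replace (Rabs (s + 1 - (s+1))) with 0 by absv.
    f_equal; [|f_equal]; apply vinf_eq; intros l Hl.
    + apply lo_eq; auto; try lra. intros j Hj; pose proof (Hle j Hj); pose proof (Hg j Hj).
      split; intro; nra.
    + rewrite !lo_rev; auto; lra.
    + rewrite !lo_rev; auto; lra.
    + apply lo_eq; auto; try lra. intros j Hj; pose proof (Hle j Hj); pose proof (Hg j Hj).
      split; intro; nra.
  - rewrite !SC_line in H. cbn [map fold_right] in H.
    replace (Rabs (1 - 0)) with 1 in H by absv.
    replace (Rabs (s + 1 - 0)) with (s+1) in H by absv.
    replace (Rabs (1 - (s+1))) with s in H by absv.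
    replace (Rabs (s + 1 - (s+1))) with 0 in H by absv.
    rewrite Rmin_right in H by lra.
    apply div_le; lra.
  - rewrite !SC_line in H. cbn [map fold_right] in H.
    replace (Rabs (0 - 0)) with 0 in H by absv.
    replace (Rabs (0 - (s+1))) with (s+1) in H by absv.
    replace (Rabs (s - 0)) with s in H by absv.
    replace (Rabs (s - (s+1))) with 1 in H by absv.
    rewrite Rmin_left in H by lra.
    apply div_le; lra.
Qed.

Lemma term_t1 : nth 0 tau 0 <= D.
Proof.
  pose proof len_pos as Hlen. set (t1 := nth 0 tau 0).
  assert (Ht1 : 1 <= t1) by (apply tau_ge1; auto).
  assert (Hge : forall j, (j < length tau)%nat -> t1 <= nth j tau 0)
    by (intros; apply tau_le; auto; lia).
  destruct (Req_dec t1 1) as [E|E].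
  { pose proof term_top as T. simpl in T.
    set (tm := nth (length tau - 1) tau 0) in T.
    assert (1 <= tm) by (apply tau_ge1; auto; lia).
    assert (1 <= (tm + 2) / tm).
    { apply Rmult_le_reg_r with tm; [lra|]. unfold Rdiv. rewrite Rmult_assoc, Rinv_l; lra. }
    lra. }
  set (h := fun x => t1 - x).
  replace t1 with (h 0) by (unfold h; ring).
  apply lim_lemma with (t1 - 1); [lra | unfold h; reg |].
  intros x Hx. unfold h. set (r := t1 - x).
  assert (Hr : 1 < r < t1) by (unfold r; lra).
  destruct (two_inst tau M D (r+1) [1] (r+1) [r] HD) as [[_ H]|[H _]].
  - rewrite !ti_line. cbn [map].
    replace (Rabs (1 - 0)) with 1 by absv.
    replace (Rabs (1 - (r+1))) with r by absv.
    replace (Rabs (r - 0)) with r by absv.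
    replace (Rabs (r - (r+1))) with 1 by absv.
    f_equal; apply vinf_eq; intros l Hl.
    + rewrite (lo_rev tau l r 1) by lra. apply lo_none. pose proof (Hge l Hl). nra.
    + rewrite (lo_rev tau l r 1) by lra. symmetry. apply lo_none. pose proof (Hge l Hl). nra.
  - rewrite !SC_line in H. cbn [map fold_right] in H.
    replace (Rabs (r - 0)) with r in H by absv.
    replace (Rabs (r - (r+1))) with 1 in H by absv.
    rewrite Rmin_right in H by lra. lra.
  - rewrite !SC_line in H. cbn [map fold_right] in H.
    replace (Rabs (1 - 0)) with 1 in H by absv.
    replace (Rabs (1 - (r+1))) with r in H by absv.
    rewrite Rmin_left in H by lra. lra.
Qed.

Lemma term_mid k : (S k < length tau)%nat ->
  mid_term (nth k tau 0) (nth (S k) tau 0) <= D.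
Proof.
  intros Hk. set (a := nth k tau 0). set (b := nth (S k) tau 0).
  assert (Ha : 1 <= a) by (apply tau_ge1; auto; lia).
  assert (Hab : a < b) by (apply tau_lt; auto).
  set (h := fun x => mid_term (a + x) (b - x)).
  replace (mid_term a b) with (h 0) by (unfold h; rewrite Rplus_0_r, Rminus_0_r; reflexivity).
  apply lim_lemma with (b - a); [lra | unfold h, mid_term; reg; nra |].
  intros x Hx. unfold h. set (t := a + x). set (s := b - x).
  assert (Ht : a < t < b) by (unfold t; lra).
  assert (Hs : a < s < b) by (unfold s; lra).
  assert (Hlev : forall j, (j < length tau)%nat ->
            (nth j tau 0 <= t <-> nth j tau 0 <= s)).
  { intros j Hj. destruct (le_lt_dec j k) as [L|L].
    - assert (nth j tau 0 <= a) by (apply tau_le; auto; lia). split; intro; lra.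
    - assert (b <= nth j tau 0) by (apply tau_le; auto; lia). split; intro; lra. }
  destruct (two_inst tau M D ((1+t)*(s-1)) [s-1; s*(1+t)]
                            ((1+t)*(s-1)) [-(1+t); t*(s-1)] HD) as [[H _]|[_ H]].
  - rewrite !ti_line. cbn [map].
    replace (Rabs (s - 1 - 0)) with (s-1) by absv.
    replace (Rabs (s - 1 - (1+t)*(s-1))) with (t*(s-1)) by absv.
    replace (Rabs (s*(1+t) - 0)) with (s*(1+t)) by absv.
    replace (Rabs (s*(1+t) - (1+t)*(s-1))) with (1+t) by absv.
    replace (Rabs (-(1+t) - 0)) with (1+t) by absv.
    replace (Rabs (-(1+t) - (1+t)*(s-1))) with (s*(1+t)) by absv.
    replace (Rabs (t*(s-1) - 0)) with (t*(s-1)) by absv.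
    replace (Rabs (t*(s-1) - (1+t)*(s-1))) with (s-1) by absv.
    f_equal; [|f_equal]; apply vinf_eq; intros l Hl.
    + apply lo_eq; auto; try nra. intros j Hj.
      rewrite (scale_le (s-1)), (scale_le (1+t)) by lra. apply Hlev; auto.
    + rewrite !lo_rev; auto; nra.
    + rewrite !lo_rev; auto; nra.
    + apply lo_eq; auto; try nra. intros j Hj.
      rewrite (scale_le (s-1)), (scale_le (1+t)) by lra. rewrite Hlev; auto. tauto.
  - rewrite !SC_line in H. cbn [map fold_right] in H.
    replace (Rabs (s - 1 - 0)) with (s-1) in H by absv.
    replace (Rabs (s - 1 - (1+t)*(s-1))) with (t*(s-1)) in H by absv.
    replace (Rabs (s*(1+t) - 0)) with (s*(1+t)) in H by absv.
    replace (Rabs (s*(1+t) - (1+t)*(s-1))) with (1+t) in H by absv.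
    rewrite Rmin_right in H by nra.
    unfold mid_term. apply div_le; nra.
  - rewrite !SC_line in H. cbn [map fold_right] in H.
    replace (Rabs (-(1+t) - 0)) with (1+t) in H by absv.
    replace (Rabs (-(1+t) - (1+t)*(s-1))) with (s*(1+t)) in H by absv.
    replace (Rabs (t*(s-1) - 0)) with (t*(s-1)) in H by absv.
    replace (Rabs (t*(s-1) - (1+t)*(s-1))) with (s-1) in H by absv.
    rewrite Rmin_left in H by nra.
    unfold mid_term. apply div_le; nra.
Qed.

End Main.

Theorem mainTheorem2 (tau : list R) (Htau : valid_thresholds tau)
  (M : Mechanism) (D : R)
  (HD : forall I : Instance, distortion_le tau M I D) :
  lower_bound tau <= D.
Proof.
  unfold lower_bound. apply fold_max_le.
  - apply Rmax_lub; [apply (term_t1 tau Htau M D HD) | apply (term_top tau Htau M D HD)].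
  - intros y Hy. apply in_map_iff in Hy. destruct Hy as [k [E Hk]]. subst y.
    apply in_seq in Hk. apply (term_mid tau Htau M D HD). lia.
Qed.
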